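(* For every $d\ge1$ and all nonnegative integers $k_1,\dots,k_d$, \[ \lim_{n\to\infty}\mathbb E\Bigl(\prod_{i=1}^d \bigl(X[n,i]\bigr)_{k_i}\Bigr)=1 . \]
   Context: Uniform random recursive tree: start at step $0$ with the tree $T_0$ consisting of the single vertex $0$ (the root). At step $n\ge1$, a vertex is chosen uniformly at random among the existing vertices $0,1,\dots,n-1$, independently of the past, and a new vertex $n$ is added and joined by an edge to the chosen vertex; $T_n$ is the resulting tree on vertices $0,\dots,n$. $\deg_n(i)$ is the degree of vertex $i$ in $T_n$, $L_n(1)$ is the set of neighbours of the root $0$ in $T_n$, and $X[n,d]=|\{i\in L_n(1):\deg_n(i)=d\}|$. For real $a$ and integer $k\ge0$, the falling factorial is $(a)_0=1$ and $(a)_k=a(a-1)\cdots(a-k+1)$ for $k\ge1$. *)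

(* Defs.v *)
From Stdlib Require Import Reals List Arith.
Import ListNotations.
Open Scope R_scope.

(* A history of the uniform random recursive tree up to step n is encoded by
   the list s = [c_1; ...; c_n] of chosen parents, c_j in {0,...,j-1};
   vertex j (1 <= j <= n) is joined to vertex c_j = nth (j-1) s 0. *)

(* All admissible choice sequences of length n (there are n! of them,
   each equally likely). *)
Fixpoint histories (n : nat) : list (list nat) :=
  match n with
  | O => [ [] ]
  | S m => flat_map (fun s => map (fun p => s ++ [p]) (seq 0 (S m))) (histories m)
  end.

Definition parent (s : list nat) (j : nat) : nat := nth (j - 1) s 0%nat.

Definition nonroot (n : nat) : list nat := seq 1 n.

Definition deg (n : nat) (s : list nat) (i : nat) : nat :=
  (length (filter (fun j => Nat.eqb (parent s j) i) (nonroot n))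
   + (if Nat.eqb i 0 then 0 else 1))%nat.

Definition rootNbrs (n : nat) (s : list nat) : list nat :=
  filter (fun j => Nat.eqb (parent s j) 0) (nonroot n).

Definition X (n : nat) (s : list nat) (d : nat) : nat :=
  length (filter (fun i => Nat.eqb (deg n s i) d) (rootNbrs n s)).

Fixpoint ffact (a : R) (k : nat) : R :=
  match k with
  | O => 1
  | S k' => ffact a k' * (a - INR k')
  end.

Fixpoint prod1 (d : nat) (f : nat -> R) : R :=
  match d with
  | O => 1
  | S d' => prod1 d' f * f d
  end.

Definition sumR (l : list R) : R := fold_right Rplus 0 l.

Definition expect (n : nat) (f : list nat -> R) : R :=
  sumR (map f (histories n)) / INR (fact n).

(* Main.v *)
Require Import Defs.
From Stdlib Require Import Reals List Arith Lia Lra.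
Import ListNotations.
Open Scope R_scope.


Lemma sumR_app l1 l2 : sumR (l1 ++ l2) = sumR l1 + sumR l2.
Proof. induction l1; simpl; [ring| rewrite IHl1; ring]. Qed.

Lemma sumR_map_flat_map {A B} (f : B -> R) (g : A -> list B) l :
  sumR (map f (flat_map g l)) = sumR (map (fun x => sumR (map f (g x))) l).
Proof. induction l; simpl; auto. rewrite map_app, sumR_app, IHl. reflexivity. Qed.

Lemma sumR_scal {A} c (f : A -> R) l : sumR (map (fun x => c * f x) l) = c * sumR (map f l).
Proof. induction l; simpl; [ring| rewrite IHl; ring]. Qed.

Lemma sumR_plus {A} (f g : A -> R) l :
  sumR (map (fun x => f x + g x) l) = sumR (map f l) + sumR (map g l).
Proof. induction l; simpl; [ring| rewrite IHl; ring]. Qed.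

Lemma sumR_minus {A} (f g : A -> R) l :
  sumR (map (fun x => f x - g x) l) = sumR (map f l) - sumR (map g l).
Proof. induction l; simpl; [ring| rewrite IHl; ring]. Qed.

Lemma sumR_ext_in {A} (f g : A -> R) l :
  (forall x, In x l -> f x = g x) -> sumR (map f l) = sumR (map g l).
Proof. induction l; simpl; intros H; auto. rewrite H, IHl; auto. Qed.

Lemma sumR_const {A} c (l : list A) : sumR (map (fun _ => c) l) = INR (length l) * c.
Proof. induction l; simpl length; [simpl; ring|]. rewrite S_INR. simpl. rewrite IHl. ring. Qed.

Lemma sumR_if {A} (P : A -> bool) (a : A -> R) b l :
  sumR (map (fun p => if P p then a p else b) l)
  = INR (length l) * b + sumR (map (fun p => a p - b) (filter P l)).
Proof.
  induction l as [|x l IH]; simpl length; [simpl; ring|]. rewrite S_INR.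
  simpl. destruct (P x); simpl; rewrite IH; ring.
Qed.

Lemma expect_ext n f g : (forall s, In s (histories n) -> f s = g s) -> expect n f = expect n g.
Proof. intros H. unfold expect. rewrite (sumR_ext_in f g); auto. Qed.

Lemma expect_plus n f g : expect n (fun s => f s + g s) = expect n f + expect n g.
Proof. unfold expect. rewrite sumR_plus. field. apply INR_fact_neq_0. Qed.

Lemma expect_minus n f g : expect n (fun s => f s - g s) = expect n f - expect n g.
Proof. unfold expect. rewrite sumR_minus. field. apply INR_fact_neq_0. Qed.

Lemma expect_scal n c f : expect n (fun s => c * f s) = c * expect n f.
Proof. unfold expect. rewrite sumR_scal. field. apply INR_fact_neq_0. Qed.

Lemma expect_S n f : expect (S n) f =
  expect n (fun s => / INR (S n) * sumR (map (fun p => f (s ++ [p])) (seq 0 (S n)))).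
Proof.
  unfold expect. cbn [histories]. rewrite sumR_map_flat_map.
  rewrite sumR_scal.
  rewrite (sumR_ext_in _ (fun s => sumR (map (fun p => f (s ++ [p])) (seq 0 (S n))))).
  2:{ intros x _. rewrite map_map. reflexivity. }
  replace (fact (S n)) with (S n * fact n)%nat by reflexivity.
  rewrite mult_INR. field. split; [apply not_0_INR; lia | apply INR_fact_neq_0].
Qed.

Lemma expect_one n : expect n (fun _ => 1) = 1.
Proof.
  induction n.
  - unfold expect. simpl. field.
  - rewrite expect_S. transitivity (expect n (fun _ => 1)); [|exact IHn].
    apply expect_ext. intros s _.
    rewrite sumR_const, length_seq. field. apply not_0_INR; lia.
Qed.

Lemma hist_valid n s : In s (histories n) ->
  length s = n /\ forall j, (1 <= j <= n)%nat -> (parent s j < j)%nat.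
Proof.
  revert s; induction n as [|n IHn]; intros s H.
  - simpl in H. destruct H as [<-|[]]. split; auto. intros; lia.
  - cbn [histories] in H. apply in_flat_map in H. destruct H as [s0 [H0 H1]].
    apply in_map_iff in H1. destruct H1 as [p [<- Hp]]. apply in_seq in Hp.
    destruct (IHn s0 H0) as [Hl Hv]. split.
    + rewrite length_app; simpl; lia.
    + intros j Hj. unfold parent. destruct (Nat.eq_dec j (S n)).
      * subst j. rewrite app_nth2 by lia. replace (S n - 1 - length s0)%nat with 0%nat by lia.
        simpl; lia.
      * rewrite app_nth1 by lia. apply Hv; lia.
Qed.


Lemma parent_app n s p j : length s = n -> (1 <= j <= n)%nat -> parent (s ++ [p]) j = parent s j.
Proof. intros Hl Hj. unfold parent. rewrite app_nth1 by lia. reflexivity. Qed.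

Lemma parent_last n s p : length s = n -> parent (s ++ [p]) (S n) = p.
Proof. intros Hl. unfold parent. rewrite app_nth2 by lia.
  replace (S n - 1 - length s)%nat with 0%nat by lia. reflexivity. Qed.

Lemma deg_app n s p v : length s = n ->
  deg (S n) (s ++ [p]) v = (deg n s v + if Nat.eqb p v then 1 else 0)%nat.
Proof.
  intros Hl. unfold deg, nonroot. rewrite seq_S, filter_app, length_app.
  rewrite (filter_ext_in (fun j => Nat.eqb (parent (s ++ [p]) j) v) (fun j => Nat.eqb (parent s j) v)).
  2:{ intros a Ha. apply in_seq in Ha. rewrite (parent_app n) by (auto; lia). reflexivity. }
  simpl filter. replace (1 + n)%nat with (S n) by lia. rewrite (parent_last n) by auto.
  destruct (Nat.eqb p v); simpl; lia.
Qed.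

Lemma rootNbrs_app n s p : length s = n ->
  rootNbrs (S n) (s ++ [p]) = rootNbrs n s ++ (if Nat.eqb p 0 then [S n] else []).
Proof.
  intros Hl. unfold rootNbrs, nonroot. rewrite seq_S, filter_app.
  rewrite (filter_ext_in (fun j => Nat.eqb (parent (s ++ [p]) j) 0) (fun j => Nat.eqb (parent s j) 0)).
  2:{ intros a Ha. apply in_seq in Ha. rewrite (parent_app n) by (auto; lia). reflexivity. }
  simpl filter. replace (1 + n)%nat with (S n) by lia. rewrite (parent_last n) by auto.
  reflexivity.
Qed.

Lemma filter_nil_all {A} (f : A -> bool) l : (forall x, In x l -> f x = false) -> filter f l = [].
Proof. induction l; simpl; intros H; auto. rewrite H by auto. apply IHl; auto. Qed.

Lemma deg_new n s : In s (histories n) -> deg n s (S n) = 1%nat.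
Proof.
  intros H. destruct (hist_valid n s H) as [Hl Hv]. unfold deg, nonroot.
  rewrite filter_nil_all. reflexivity.
  intros j Hj. apply in_seq in Hj. apply Nat.eqb_neq. specialize (Hv j ltac:(lia)). lia.
Qed.

Lemma rootNbrs_in n s v : In v (rootNbrs n s) <-> (In v (seq 1 n) /\ parent s v = 0%nat).
Proof. unfold rootNbrs, nonroot. rewrite filter_In. rewrite Nat.eqb_eq. tauto. Qed.

Lemma rootNbrs_nodup n s : NoDup (rootNbrs n s).
Proof. apply NoDup_filter, seq_NoDup. Qed.

Lemma deg_pos n s v : v <> 0%nat -> (1 <= deg n s v)%nat.
Proof. intros H. unfold deg. apply Nat.eqb_neq in H. rewrite H. lia. Qed.

Lemma count_notin (dl : nat -> nat) p i L : ~ In p L ->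
  length (filter (fun v => Nat.eqb (dl v + if Nat.eqb p v then 1 else 0) i) L)
  = length (filter (fun v => Nat.eqb (dl v) i) L).
Proof.
  intros H. f_equal. apply filter_ext_in. intros a Ha.
  destruct (Nat.eqb_spec p a); [subst; contradiction|]. rewrite Nat.add_0_r. reflexivity.
Qed.

Lemma count_in (dl : nat -> nat) p i L : In p L -> NoDup L ->
  INR (length (filter (fun v => Nat.eqb (dl v + if Nat.eqb p v then 1 else 0) i) L))
  = INR (length (filter (fun v => Nat.eqb (dl v) i) L))
    - (if Nat.eqb (dl p) i then 1 else 0) + (if Nat.eqb (S (dl p)) i then 1 else 0).
Proof.
  induction L as [|a L IH]; intros Hin Hnd; [destruct Hin|].
  inversion Hnd as [|a0 l0 Hna Hnd' E]; subst.
  destruct (Nat.eqb_spec p a).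
  - subst a. cbn [filter]. rewrite Nat.eqb_refl.
    pose proof (count_notin dl p i L Hna) as C.
    replace (dl p + 1)%nat with (S (dl p)) by lia.
    destruct (Nat.eqb (S (dl p)) i), (Nat.eqb (dl p) i); cbn [length]; rewrite ?S_INR; rewrite C; ring.
  - destruct Hin as [Hin|Hin]; [congruence|].
    assert (E: Nat.eqb p a = false) by (apply Nat.eqb_neq; auto).
    cbn [filter]. rewrite E, Nat.add_0_r.
    destruct (Nat.eqb (dl a) i); cbn [length]; rewrite ?S_INR, IH by auto; ring.
Qed.


Fixpoint sum1 (d : nat) (f : nat -> R) : R :=
  match d with O => 0 | S d' => sum1 d' f + f d end.
Fixpoint nsum (d : nat) (f : nat -> nat) : nat :=
  match d with O => 0%nat | S d' => (nsum d' f + f d)%nat end.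

Lemma prod1_ext d f g : (forall i, (1 <= i <= d)%nat -> f i = g i) -> prod1 d f = prod1 d g.
Proof. induction d; simpl; intros H; auto. rewrite IHd by (intros; apply H; lia). rewrite H by lia. reflexivity. Qed.
Lemma sum1_ext d f g : (forall i, (1 <= i <= d)%nat -> f i = g i) -> sum1 d f = sum1 d g.
Proof. induction d; simpl; intros H; auto. rewrite IHd by (intros; apply H; lia). rewrite H by lia. reflexivity. Qed.
Lemma nsum_ext d f g : (forall i, (1 <= i <= d)%nat -> f i = g i) -> nsum d f = nsum d g.
Proof. induction d; simpl; intros H; auto. rewrite IHd by (intros; apply H; lia). rewrite H by lia. reflexivity. Qed.

Lemma prod1_one d : prod1 d (fun _ => 1) = 1.
Proof. induction d; simpl; auto. rewrite IHd; ring. Qed.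

Lemma sum1_plus d f g : sum1 d (fun j => f j + g j) = sum1 d f + sum1 d g.
Proof. induction d; simpl; [ring|rewrite IHd; ring]. Qed.
Lemma sum1_minus d f g : sum1 d (fun j => f j - g j) = sum1 d f - sum1 d g.
Proof. induction d; simpl; [ring|rewrite IHd; ring]. Qed.
Lemma sum1_mult_r d f c : sum1 d (fun j => f j * c) = sum1 d f * c.
Proof. induction d; simpl; [ring|rewrite IHd; ring]. Qed.
Lemma sum1_INR d f : sum1 d (fun j => INR (f j)) = INR (nsum d f).
Proof. induction d; simpl; auto. rewrite IHd, plus_INR; ring. Qed.

Lemma sum1_delta d m g : (1 <= m)%nat ->
  sum1 d (fun j => if Nat.eqb m j then g j else 0) = if Nat.leb m d then g m else 0.
Proof.
  intros Hm. induction d; simpl sum1.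
  - destruct m; [lia|reflexivity].
  - rewrite IHd. destruct (Nat.eqb_spec m (S d)).
    + subst. rewrite (proj2 (Nat.leb_gt (S d) d)) by lia. rewrite Nat.leb_refl. ring.
    + destruct (Nat.leb_spec m d); destruct (Nat.leb_spec m (S d)); try lia; ring.
Qed.

Lemma nsum_zero d f : nsum d f = 0%nat -> forall j, (1 <= j <= d)%nat -> f j = 0%nat.
Proof.
  induction d; simpl; intros H j Hj; [lia|].
  destruct (Nat.eq_dec j (S d)); [subst; lia|]. apply IHd; lia.
Qed.

Lemma nsum_shift d k : (k 1%nat + nsum d (fun j => k (S j)) = nsum d k + k (S d))%nat.
Proof. induction d; simpl; lia. Qed.

Lemma prod1_extract d j f : (1 <= j <= d)%nat ->
  prod1 d f = f j * prod1 d (fun i => if Nat.eqb i j then 1 else f i).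
Proof.
  induction d; intros Hj; [lia|]. cbn [prod1].
  destruct (Nat.eq_dec j (S d)).
  - subst. rewrite Nat.eqb_refl.
    rewrite (prod1_ext d (fun i => if Nat.eqb i (S d) then 1 else f i) f).
    + ring.
    + intros i Hi. destruct (Nat.eqb_spec i (S d)); [lia|auto].
  - rewrite IHd by lia. cbv beta. destruct (Nat.eqb_spec (S d) j); [lia|]. ring.
Qed.

Lemma nsum_extract d j f : (1 <= j <= d)%nat ->
  nsum d f = (f j + nsum d (fun i => if Nat.eqb i j then 0 else f i))%nat.
Proof.
  induction d; intros Hj; [lia|]. cbn [nsum].
  destruct (Nat.eq_dec j (S d)).
  - subst. rewrite Nat.eqb_refl.
    rewrite (nsum_ext d (fun i => if Nat.eqb i (S d) then 0%nat else f i) f).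
    + lia.
    + intros i Hi. destruct (Nat.eqb_spec i (S d)); [lia|auto].
  - rewrite IHd by lia. cbv beta. destruct (Nat.eqb_spec (S d) j); [lia|]. lia.
Qed.

Lemma prod1_extract2 d j f : (1 <= j)%nat -> (S j <= d)%nat ->
  prod1 d f = f j * f (S j) * prod1 d (fun i => if Nat.eqb i j then 1 else if Nat.eqb i (S j) then 1 else f i).
Proof.
  intros H1 H2. rewrite (prod1_extract d j) by lia.
  rewrite (prod1_extract d (S j)) by lia.
  destruct (Nat.eqb_spec (S j) j); [lia|].
  rewrite (prod1_ext d (fun i => if Nat.eqb i (S j) then 1 else if Nat.eqb i j then 1 else f i)
     (fun i => if Nat.eqb i j then 1 else if Nat.eqb i (S j) then 1 else f i)).
  - ring.
  - intros i _. destruct (Nat.eqb_spec i j), (Nat.eqb_spec i (S j)); auto.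
Qed.

Lemma nsum_extract2 d j f : (1 <= j)%nat -> (S j <= d)%nat ->
  nsum d f = (f j + f (S j) + nsum d (fun i => if Nat.eqb i j then 0 else if Nat.eqb i (S j) then 0 else f i))%nat.
Proof.
  intros H1 H2. rewrite (nsum_extract d j) by lia.
  rewrite (nsum_extract d (S j)) by lia.
  destruct (Nat.eqb_spec (S j) j); [lia|].
  rewrite (nsum_ext d (fun i => if Nat.eqb i (S j) then 0%nat else if Nat.eqb i j then 0%nat else f i)
     (fun i => if Nat.eqb i j then 0%nat else if Nat.eqb i (S j) then 0%nat else f i)).
  - lia.
  - intros i _. destruct (Nat.eqb_spec i j), (Nat.eqb_spec i (S j)); auto.
Qed.

Lemma ffact_S_l a m : ffact a (S m) = a * ffact (a - 1) m.
Proof.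
  induction m. simpl; ring.
  cbn [ffact] in *. rewrite IHm. rewrite S_INR. ring.
Qed.

Lemma ffact_up a m : ffact (a + 1) m = ffact a m + INR m * ffact a (m - 1).
Proof.
  destruct m. simpl; ring.
  rewrite ffact_S_l. replace (a + 1 - 1) with a by ring.
  replace (S m - 1)%nat with m by lia. cbn [ffact]. rewrite S_INR. ring.
Qed.

Lemma ffact_down a m : a * ffact (a - 1) m = ffact a m * (a - INR m).
Proof. rewrite <- ffact_S_l. reflexivity. Qed.

Definition Fk (d : nat) (k : nat -> nat) (y : nat -> R) : R := prod1 d (fun i => ffact (y i) (k i)).

Lemma Fk_ext d k y z : (forall i, (1 <= i <= d)%nat -> y i = z i) -> Fk d k y = Fk d k z.
Proof. intros H. unfold Fk. apply prod1_ext. intros i Hi. rewrite H; auto. Qed.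

Definition up1 (y : nat -> R) : nat -> R := fun i => y i + if Nat.eqb 1 i then 1 else 0.
Definition shift (j : nat) (y : nat -> R) : nat -> R :=
  fun i => y i - (if Nat.eqb j i then 1 else 0) + (if Nat.eqb (S j) i then 1 else 0).
Definition dec1 (k : nat -> nat) : nat -> nat := fun i => if Nat.eqb i 1 then (k i - 1)%nat else k i.
Definition mv (j : nat) (k : nat -> nat) : nat -> nat :=
  fun i => if Nat.eqb i j then S (k i) else if Nat.eqb i (S j) then (k i - 1)%nat else k i.

Lemma sA1 d k y : (1 <= d)%nat ->
  Fk d k (up1 y) - Fk d k y = INR (k 1%nat) * Fk d (dec1 k) y.
Proof.
  intros Hd. unfold Fk.
  rewrite (prod1_extract d 1 (fun i => ffact (up1 y i) (k i))) by lia.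
  rewrite (prod1_extract d 1 (fun i => ffact (y i) (k i))) by lia.
  rewrite (prod1_extract d 1 (fun i => ffact (y i) (dec1 k i))) by lia.
  set (R0 := prod1 d (fun i => if Nat.eqb i 1 then 1 else ffact (y i) (k i))).
  assert (E1 : prod1 d (fun i => if Nat.eqb i 1 then 1 else ffact (up1 y i) (k i)) = R0).
  { apply prod1_ext. intros i _. unfold up1. destruct (Nat.eqb_spec i 1); auto.
    destruct (Nat.eqb_spec 1 i); [lia|]. rewrite Rplus_0_r. reflexivity. }
  assert (E2 : prod1 d (fun i => if Nat.eqb i 1 then 1 else ffact (y i) (dec1 k i)) = R0).
  { apply prod1_ext. intros i _. unfold dec1. destruct (Nat.eqb i 1); auto. }
  rewrite E1, E2. unfold up1, dec1. rewrite Nat.eqb_refl. rewrite ffact_up. ring.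
Qed.

Lemma sA2 d k y j : (1 <= j)%nat -> (S j <= d)%nat ->
  y j * (Fk d k (shift j y) - Fk d k y) = INR (k (S j)) * Fk d (mv j k) y - INR (k j) * Fk d k y.
Proof.
  intros H1 H2. unfold Fk.
  rewrite (prod1_extract2 d j (fun i => ffact (shift j y i) (k i))) by lia.
  rewrite (prod1_extract2 d j (fun i => ffact (y i) (k i))) by lia.
  rewrite (prod1_extract2 d j (fun i => ffact (y i) (mv j k i))) by lia.
  set (R0 := prod1 d (fun i => if Nat.eqb i j then 1 else if Nat.eqb i (S j) then 1 else ffact (y i) (k i))).
  assert (E1 : prod1 d (fun i => if Nat.eqb i j then 1 else if Nat.eqb i (S j) then 1 else ffact (shift j y i) (k i)) = R0).
  { apply prod1_ext. intros i _. unfold shift.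
    destruct (Nat.eqb_spec i j); auto. destruct (Nat.eqb_spec i (S j)); auto.
    destruct (Nat.eqb_spec j i); [lia|]. destruct (Nat.eqb_spec (S j) i); [lia|].
    f_equal. ring. }
  assert (E2 : prod1 d (fun i => if Nat.eqb i j then 1 else if Nat.eqb i (S j) then 1 else ffact (y i) (mv j k i)) = R0).
  { apply prod1_ext. intros i _. unfold mv.
    destruct (Nat.eqb_spec i j); auto. destruct (Nat.eqb_spec i (S j)); auto. }
  rewrite E1, E2. clearbody R0. unfold shift, mv. rewrite !Nat.eqb_refl.
  assert (E3 : Nat.eqb (S j) j = false) by (apply Nat.eqb_neq; lia).
  assert (E4 : Nat.eqb j (S j) = false) by (apply Nat.eqb_neq; lia).
  rewrite E3, E4.
  replace (y j - 1 + 0) with (y j - 1) by ring.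
  replace (y (S j) - 0 + 1) with (y (S j) + 1) by ring.
  rewrite ffact_up.
  replace (y j * (ffact (y j - 1) (k j) * (ffact (y (S j)) (k (S j)) + INR (k (S j)) * ffact (y (S j)) (k (S j) - 1)) * R0 -
      ffact (y j) (k j) * ffact (y (S j)) (k (S j)) * R0))
    with ((y j * ffact (y j - 1) (k j)) * (ffact (y (S j)) (k (S j)) + INR (k (S j)) * ffact (y (S j)) (k (S j) - 1)) * R0 -
      y j * ffact (y j) (k j) * ffact (y (S j)) (k (S j)) * R0) by ring.
  rewrite ffact_down. cbn [ffact]. ring.
Qed.

Lemma sA3 d k y : (1 <= d)%nat ->
  y d * (Fk d k (shift d y) - Fk d k y) = - INR (k d) * Fk d k y.
Proof.
  intros H1. unfold Fk.
  rewrite (prod1_extract d d (fun i => ffact (shift d y i) (k i))) by lia.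
  rewrite (prod1_extract d d (fun i => ffact (y i) (k i))) by lia.
  set (R0 := prod1 d (fun i => if Nat.eqb i d then 1 else ffact (y i) (k i))).
  assert (E1 : prod1 d (fun i => if Nat.eqb i d then 1 else ffact (shift d y i) (k i)) = R0).
  { apply prod1_ext. intros i Hi. unfold shift.
    destruct (Nat.eqb_spec i d); auto.
    destruct (Nat.eqb_spec d i); [lia|]. destruct (Nat.eqb_spec (S d) i); [lia|].
    f_equal. ring. }
  rewrite E1. clearbody R0. unfold shift. rewrite !Nat.eqb_refl.
  assert (E3 : Nat.eqb (S d) d = false) by (apply Nat.eqb_neq; lia).
  rewrite E3.
  replace (y d - 1 + 0) with (y d - 1) by ring.
  replace (y d * (ffact (y d - 1) (k d) * R0 - ffact (y d) (k d) * R0))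
    with ((y d * ffact (y d - 1) (k d)) * R0 - y d * ffact (y d) (k d) * R0) by ring.
  rewrite ffact_down. ring.
Qed.

Lemma sA2' d k y j : (1 <= j <= d)%nat -> k (S d) = 0%nat ->
  y j * (Fk d k (shift j y) - Fk d k y) = INR (k (S j)) * Fk d (mv j k) y - INR (k j) * Fk d k y.
Proof.
  intros Hj Hk. destruct (Nat.eq_dec j d).
  - subst j. rewrite sA3 by lia. rewrite Hk. simpl INR. ring.
  - apply sA2; lia.
Qed.


Definition Yv n s : nat -> R := fun i => INR (X n s i).

Lemma X_app n s p i : length s = n ->
  X (S n) (s ++ [p]) i =
  (length (filter (fun v => Nat.eqb (deg n s v + if Nat.eqb p v then 1 else 0) i) (rootNbrs n s))
   + length (filter (fun v => Nat.eqb (deg (S n) (s ++ [p]) v) i) (if Nat.eqb p 0 then [S n] else [])))%nat.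
Proof.
  intros Hl. unfold X. rewrite (rootNbrs_app n) by auto. rewrite filter_app, length_app.
  f_equal. f_equal. apply filter_ext_in. intros a _. rewrite (deg_app n) by auto. reflexivity.
Qed.

Lemma Yv_p0 n s : In s (histories n) -> forall i, Yv (S n) (s ++ [0%nat]) i = up1 (Yv n s) i.
Proof.
  intros H i. destruct (hist_valid n s H) as [Hl _].
  unfold Yv, up1. rewrite (X_app n) by auto. simpl (Nat.eqb 0 0). cbv iota.
  rewrite plus_INR. f_equal.
  - f_equal. unfold X. f_equal. apply filter_ext_in. intros a Ha.
    apply rootNbrs_in in Ha. destruct Ha as [Ha _]. apply in_seq in Ha.
    destruct a; [lia|]. simpl (Nat.eqb 0 (S a)). rewrite Nat.add_0_r. reflexivity.
  - cbn [filter]. rewrite (deg_app n) by auto. rewrite (deg_new n s H).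
    replace (Nat.eqb 0 (S n)) with false by reflexivity. rewrite Nat.add_0_r.
    destruct (Nat.eqb 1 i); reflexivity.
Qed.

Lemma Fk_p d k n s p : In s (histories n) -> In p (seq 1 n) ->
  Fk d k (Yv (S n) (s ++ [p])) =
  if Nat.eqb (parent s p) 0 then Fk d k (shift (deg n s p) (Yv n s)) else Fk d k (Yv n s).
Proof.
  intros H Hp. destruct (hist_valid n s H) as [Hl _].
  assert (Hp0 : Nat.eqb p 0 = false) by (apply Nat.eqb_neq; apply in_seq in Hp; lia).
  assert (EX : forall i, X (S n) (s ++ [p]) i =
     length (filter (fun v => Nat.eqb (deg n s v + if Nat.eqb p v then 1 else 0) i) (rootNbrs n s))).
  { intros i. rewrite (X_app n) by auto. rewrite Hp0. simpl. lia. }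
  destruct (Nat.eqb_spec (parent s p) 0) as [E|E].
  - apply Fk_ext. intros i _. unfold Yv. rewrite EX.
    rewrite count_in.
    + unfold shift. reflexivity.
    + apply rootNbrs_in. auto.
    + apply rootNbrs_nodup.
  - apply Fk_ext. intros i _. unfold Yv. rewrite EX. rewrite count_notin. reflexivity.
    intros Hin. apply rootNbrs_in in Hin. tauto.
Qed.

Lemma sum_group (dl : nat -> nat) (g : nat -> R) d L :
  (forall v, In v L -> (1 <= dl v)%nat) -> (forall j, (d < j)%nat -> g j = 0) ->
  sumR (map (fun v => g (dl v)) L) =
  sum1 d (fun j => INR (length (filter (fun v => Nat.eqb (dl v) j) L)) * g j).
Proof.
  intros H1 H2. induction L as [|a L IH].
  - transitivity (sum1 d (fun _ => 0)).
    { clear. unfold sumR. simpl. induction d; simpl; [auto | rewrite <- IHd; ring]. }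
    apply sum1_ext; intros; simpl; ring.
  - cbn [map sumR fold_right]. change (fold_right Rplus 0 (map (fun v => g (dl v)) L)) with (sumR (map (fun v => g (dl v)) L)).
    rewrite IH by (intros; apply H1; simpl; auto).
    rewrite (sum1_ext d (fun j => INR (length (filter (fun v => Nat.eqb (dl v) j) (a :: L))) * g j) (fun j => (if Nat.eqb (dl a) j then g j else 0) +
        INR (length (filter (fun v => Nat.eqb (dl v) j) L)) * g j)).
    + rewrite sum1_plus. rewrite sum1_delta by (apply H1; simpl; auto).
      destruct (Nat.leb_spec (dl a) d); [ring|]. rewrite H2 by lia. ring.
    + intros j _. cbn [filter]. destruct (Nat.eqb (dl a) j); cbn [length]; rewrite ?S_INR; ring.
Qed.

Lemma step_pointwise d k n s : (1 <= d)%nat -> k (S d) = 0%nat -> In s (histories n) ->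
  sumR (map (fun p => Fk d k (Yv (S n) (s ++ [p]))) (seq 0 (S n))) =
  INR (S n) * Fk d k (Yv n s) + INR (k 1%nat) * Fk d (dec1 k) (Yv n s)
  + sum1 d (fun j => INR (k (S j)) * Fk d (mv j k) (Yv n s))
  - sum1 d (fun j => INR (k j)) * Fk d k (Yv n s).
Proof.
  intros Hd Hk H. set (y := Yv n s).
  replace (seq 0 (S n)) with (0%nat :: seq 1 n) by reflexivity.
  cbn [map sumR fold_right].
  change (fold_right Rplus 0 (map (fun p => Fk d k (Yv (S n) (s ++ [p]))) (seq 1 n)))
    with (sumR (map (fun p => Fk d k (Yv (S n) (s ++ [p]))) (seq 1 n))).
  rewrite (Fk_ext d k _ (up1 y)) by (intros; apply Yv_p0; auto).
  rewrite (sumR_ext_in _ (fun p => if Nat.eqb (parent s p) 0 then Fk d k (shift (deg n s p) y) else Fk d k y))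
    by (intros; apply Fk_p; auto).
  rewrite sumR_if, length_seq.
  change (filter (fun p => Nat.eqb (parent s p) 0) (seq 1 n)) with (rootNbrs n s).
  rewrite (sum_group (deg n s) (fun j => Fk d k (shift j y) - Fk d k y) d).
  - change (fun j => INR (length (filter (fun v => Nat.eqb (deg n s v) j) (rootNbrs n s))) *
             (Fk d k (shift j y) - Fk d k y))
      with (fun j => y j * (Fk d k (shift j y) - Fk d k y)).
    rewrite (sum1_ext d _ (fun j => INR (k (S j)) * Fk d (mv j k) y - INR (k j) * Fk d k y))
      by (intros; apply sA2'; auto).
    rewrite sum1_minus, sum1_mult_r.
    pose proof (sA1 d k y Hd). rewrite S_INR. lra.
  - intros v Hv. apply deg_pos. apply rootNbrs_in in Hv. destruct Hv as [Hv _].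
    apply in_seq in Hv. lia.
  - intros j Hj. rewrite (Fk_ext d k (shift j y) y). ring.
    intros i Hi. unfold shift. destruct (Nat.eqb_spec j i); [lia|].
    destruct (Nat.eqb_spec (S j) i); [lia|]. ring.
Qed.


Definition Fn d k n := expect n (fun s => Fk d k (Yv n s)).

Lemma expect_sum1 n d (h : nat -> list nat -> R) :
  expect n (fun s => sum1 d (fun j => h j s)) = sum1 d (fun j => expect n (h j)).
Proof.
  induction d; simpl.
  - unfold expect. rewrite (sumR_const 0). unfold Rdiv. ring.
  - rewrite expect_plus. rewrite IHd. reflexivity.
Qed.

Lemma Fn_rec d k n : (1 <= d)%nat -> k (S d) = 0%nat ->
  Fn d k (S n) = Fn d k n + / INR (S n) * (INR (k 1%nat) * Fn d (dec1 k) n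
     + sum1 d (fun j => INR (k (S j)) * Fn d (mv j k) n) - sum1 d (fun j => INR (k j)) * Fn d k n).
Proof.
  intros Hd Hk. unfold Fn. rewrite expect_S.
  rewrite (expect_ext n _ (fun s => / INR (S n) * (INR (S n) * Fk d k (Yv n s) + INR (k 1%nat) * Fk d (dec1 k) (Yv n s)
  + sum1 d (fun j => INR (k (S j)) * Fk d (mv j k) (Yv n s))
  - sum1 d (fun j => INR (k j)) * Fk d k (Yv n s)))).
  2:{ intros s Hs. rewrite step_pointwise; auto. }
  rewrite expect_scal, expect_minus, !expect_plus, !expect_scal.
  rewrite (expect_sum1 n d (fun j s => INR (k (S j)) * Fk d (mv j k) (Yv n s))).
  rewrite (sum1_ext d (fun j => expect n (fun s => INR (k (S j)) * Fk d (mv j k) (Yv n s)))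
     (fun j => INR (k (S j)) * expect n (fun s => Fk d (mv j k) (Yv n s)))).
  2:{ intros; apply expect_scal. }
  field. apply not_0_INR. lia.
Qed.


Lemma lim_lemma (x y : nat -> R) (K : nat) : (1 <= K)%nat ->
  (forall n, x (S n) = x n + / INR (S n) * (INR K * y n - INR K * x n)) ->
  Un_cv y 1 -> Un_cv x 1.
Proof.
  intros HK Hrec Hy eps Heps.
  destruct (Hy (eps / 2)) as [N1 HN1]; [lra|].
  set (N := Nat.max N1 K).
  set (b := fun n => Rmax 0 (Rabs (x n - 1) - eps / 2)).
  assert (Hb0 : forall n, 0 <= b n) by (intros; apply Rmax_l).
  assert (Hstep : forall n, (n >= N)%nat -> INR (S n) * b (S n) <= INR n * b n).
  { intros n Hn.
    set (s := INR (S n)). set (Kr := INR K).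
    assert (Hs : s = INR n + 1) by (unfold s; apply S_INR).
    assert (HKr1 : 1 <= Kr) by (unfold Kr; apply (le_INR 1); lia).
    assert (HKrn : Kr <= INR n) by (unfold Kr; apply le_INR; lia).
    assert (Hn0 : 0 <= INR n) by apply pos_INR.
    assert (E : s * (x (S n) - 1) = (s - Kr) * (x n - 1) + Kr * (y n - 1)).
    { rewrite Hrec. unfold s, Kr. field. apply not_0_INR; lia. }
    assert (Hf : Rabs (y n - 1) < eps / 2) by (apply HN1; lia).
    assert (Ha : s * Rabs (x (S n) - 1) <= (s - Kr) * Rabs (x n - 1) + Kr * (eps / 2)).
    { replace (s * Rabs (x (S n) - 1)) with (Rabs (s * (x (S n) - 1))).
      2:{ rewrite Rabs_mult. rewrite (Rabs_right s) by lra. reflexivity. }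
      rewrite E. eapply Rle_trans; [apply Rabs_triang|].
      rewrite !Rabs_mult. rewrite (Rabs_right (s - Kr)) by lra. rewrite (Rabs_right Kr) by lra.
      apply Rplus_le_compat_l. apply Rmult_le_compat_l; lra. }
    assert (Hbn : Rabs (x n - 1) - eps / 2 <= b n) by apply Rmax_r.
    assert (Hm1 : (s - Kr) * (Rabs (x n - 1) - eps / 2) <= (s - Kr) * b n)
      by (apply Rmult_le_compat_l; lra).
    assert (Hm2 : (s - Kr) * b n <= INR n * b n)
      by (apply Rmult_le_compat_r; [apply Hb0|lra]).
    assert (Hm3 : 0 <= (s - Kr) * b n) by (apply Rmult_le_pos; [lra|apply Hb0]).
    unfold b at 1. apply Rle_trans with ((s - Kr) * b n); [|exact Hm2].
    unfold Rmax. destruct (Rle_dec 0 (Rabs (x (S n) - 1) - eps / 2)).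
    - lra.
    - lra. }
  assert (Hiter : forall t, INR (N + t) * b (N + t)%nat <= INR N * b N).
  { induction t. rewrite Nat.add_0_r. lra.
    replace (N + S t)%nat with (S (N + t)) by lia.
    eapply Rle_trans; [apply Hstep; lia|]. exact IHt. }
  set (C := INR N * b N).
  assert (HC : 0 <= C) by (apply Rmult_le_pos; [apply pos_INR|apply Hb0]).
  destruct (archimed_cor1 (eps / (2 * (C + 1)))) as [M [HM HM0]].
  { apply Rdiv_lt_0_compat; lra. }
  exists (Nat.max N M). intros n Hn.
  assert (HnC : INR n * b n <= C).
  { replace n with (N + (n - N))%nat by lia. apply Hiter. }
  assert (HnM : INR M <= INR n) by (apply le_INR; lia).
  assert (HM0' : 0 < INR M) by (apply lt_0_INR; lia).
  assert (Hinv : / INR n <= / INR M) by (apply Rinv_le_contravar; lra).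
  assert (Hbn : b n <= C * / INR n).
  { apply Rmult_le_reg_l with (INR n); [lra|]. rewrite <- Rmult_assoc.
    rewrite (Rmult_comm (INR n) C). rewrite Rmult_assoc, Rinv_r by lra. lra. }
  assert (Hlt : C * / INR n <= C * (eps / (2 * (C + 1)))).
  { apply Rmult_le_compat_l; lra. }
  assert (Hc2 : C * (eps / (2 * (C + 1))) < eps / 2).
  { unfold Rdiv. rewrite Rinv_mult. 
    assert (0 < / (C + 1)) by (apply Rinv_0_lt_compat; lra).
    assert (C * / (C + 1) < 1).
    { apply Rmult_lt_reg_r with (C + 1); [lra|]. rewrite Rmult_assoc, Rinv_l by lra. lra. }
    replace (C * (eps * (/ 2 * / (C + 1)))) with ((C * / (C + 1)) * (eps / 2)) by (unfold Rdiv; ring).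
    replace (eps * / 2) with (eps / 2) by reflexivity.
    rewrite <- (Rmult_1_l (eps / 2)) at 2. apply Rmult_lt_compat_r; lra. }
  assert (Hr : Rabs (x n - 1) - eps / 2 <= b n) by apply Rmax_r.
  unfold R_dist. lra.
Qed.


Lemma Un_cv_ext (u v : nat -> R) l : (forall n, u n = v n) -> Un_cv u l -> Un_cv v l.
Proof. intros H Hu eps He. destruct (Hu eps He) as [N HN]. exists N. intros n Hn. rewrite <- H. auto. Qed.

Lemma Un_cv_const c : Un_cv (fun _ => c) c.
Proof. intros eps He. exists 0%nat. intros. unfold R_dist. replace (c - c) with 0 by ring.
  rewrite Rabs_R0. lra. Qed.

Lemma cvc c u : (c = 0 \/ Un_cv u 1) -> Un_cv (fun n => c * u n) c.
Proof.
  intros [H|H].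
  - subst. apply (Un_cv_ext (fun _ => 0)). intros; ring. apply Un_cv_const.
  - assert (H0 : Un_cv (fun n => c * u n) (c * 1)) by (apply CV_mult; auto; apply Un_cv_const).
    rewrite Rmult_1_r in H0. exact H0.
Qed.

Lemma sum1_cv d (u : nat -> nat -> R) (l : nat -> R) :
  (forall j, (1 <= j <= d)%nat -> Un_cv (u j) (l j)) ->
  Un_cv (fun n => sum1 d (fun j => u j n)) (sum1 d l).
Proof.
  induction d; intros H; simpl.
  - apply Un_cv_const.
  - apply CV_plus. apply IHd; intros; apply H; lia. apply H; lia.
Qed.

Definition supp d k := forall i, (i = 0 \/ d < i)%nat -> k i = 0%nat.
Definition mu d k := nsum d (fun i => i * k i)%nat.

Lemma zero_case d k : (forall j, (1 <= j <= d)%nat -> k j = 0%nat) -> Un_cv (Fn d k) 1.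
Proof.
  intros H. apply (Un_cv_ext (fun _ => 1)); [|apply Un_cv_const].
  intros n. unfold Fn. rewrite <- (expect_one n) at 1. apply expect_ext. intros s _.
  unfold Fk. rewrite <- (prod1_one d) at 1. apply prod1_ext. intros i Hi. rewrite H by auto. reflexivity.
Qed.

Lemma main_ind d : (1 <= d)%nat -> forall m k, supp d k -> (mu d k <= m)%nat -> Un_cv (Fn d k) 1.
Proof.
  intros Hd m. induction m as [|m IH]; intros k Hs Hmu.
  - apply zero_case. intros j Hj. assert (mu d k = 0%nat) by lia.
    pose proof (nsum_zero d _ H j Hj). simpl in H0. nia.
  - destruct (Nat.eq_dec (nsum d k) 0) as [E|E].
    { apply zero_case. apply nsum_zero; auto. }
    assert (HkS : k (S d) = 0%nat) by (apply Hs; lia).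
    apply (lim_lemma _ (fun n => (INR (k 1%nat) * Fn d (dec1 k) n
        + sum1 d (fun j => INR (k (S j)) * Fn d (mv j k) n)) / INR (nsum d k)) (nsum d k)).
    + lia.
    + intros n. rewrite Fn_rec by auto. rewrite sum1_INR. field. split; apply not_0_INR; lia.
    + assert (EK : INR (nsum d k) = INR (k 1%nat) + sum1 d (fun j => INR (k (S j)))).
      { rewrite sum1_INR, <- plus_INR. f_equal. pose proof (nsum_shift d k). lia. }
      replace 1 with ((INR (k 1%nat) + sum1 d (fun j => INR (k (S j)))) * / INR (nsum d k)).
      2:{ rewrite <- EK. field. apply not_0_INR; lia. }
      apply CV_mult; [|apply Un_cv_const].
      apply CV_plus.
      * apply cvc. destruct (Nat.eq_dec (k 1%nat) 0) as [E1|E1]; [left; rewrite E1; reflexivity|right].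
        apply IH.
        -- intros i Hi. unfold dec1. destruct (Nat.eqb_spec i 1); [lia|]. apply Hs; auto.
        -- unfold mu in *. rewrite (nsum_extract d 1) in Hmu by lia.
           rewrite (nsum_extract d 1) by lia.
           rewrite (nsum_ext d (fun i => if Nat.eqb i 1 then 0%nat else (i * dec1 k i)%nat)
                     (fun i => if Nat.eqb i 1 then 0%nat else (i * k i)%nat)) in *.
           ++ unfold dec1 at 1. simpl (Nat.eqb 1 1). cbv iota. lia.
           ++ intros i _. unfold dec1. destruct (Nat.eqb i 1); reflexivity.
      * apply sum1_cv. intros j Hj. apply cvc.
        destruct (Nat.eq_dec (k (S j)) 0) as [E1|E1]; [left; rewrite E1; reflexivity|right].
        assert (HSj : (S j <= d)%nat).
        { destruct (Nat.le_gt_cases (S j) d); auto. exfalso. apply E1. apply Hs. lia. }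
        apply IH.
        -- intros i Hi. unfold mv. destruct (Nat.eqb_spec i j); [lia|].
           destruct (Nat.eqb_spec i (S j)); [lia|]. apply Hs; auto.
        -- unfold mu in *. rewrite (nsum_extract2 d j) in Hmu by lia.
           rewrite (nsum_extract2 d j) by lia.
           rewrite (nsum_ext d (fun i => if Nat.eqb i j then 0%nat else if Nat.eqb i (S j) then 0%nat else (i * mv j k i)%nat)
                     (fun i => if Nat.eqb i j then 0%nat else if Nat.eqb i (S j) then 0%nat else (i * k i)%nat)).
           ++ unfold mv. rewrite Nat.eqb_refl.
              assert (E3 : Nat.eqb (S j) j = false) by (apply Nat.eqb_neq; lia).
              rewrite E3, Nat.eqb_refl. nia.
           ++ intros i _. unfold mv. destruct (Nat.eqb i j); auto. destruct (Nat.eqb i (S j)); auto.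
Qed.


Theorem mainTheorem5 (d : nat) (hd : (1 <= d)%nat) (k : nat -> nat) :
  Un_cv (fun n => expect n (fun s => prod1 d (fun i => ffact (INR (X n s i)) (k i)))) 1.
Proof.
  set (kk := fun i => if (Nat.leb 1 i && Nat.leb i d)%bool then k i else 0%nat).
  apply (Un_cv_ext (Fn d kk)).
  - intros n. unfold Fn. apply expect_ext. intros s _. unfold Fk. apply prod1_ext.
    intros i Hi. unfold kk. destruct (Nat.leb_spec 1 i); [|lia]. destruct (Nat.leb_spec i d); [|lia].
    reflexivity.
  - apply (main_ind d hd (mu d kk)); [|lia].
    intros i Hi. unfold kk. destruct (Nat.leb_spec 1 i), (Nat.leb_spec i d); simpl; auto; lia.
Qed.
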